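(* Let $\eta,\delta,M$ be integers greater than $1$ and let $f$ be a positive integer, with $\gcd(\eta,\delta)=1$, such that $$M=\frac{\delta^{2}(3f^{2}-1)}{3(\eta+\delta)^{2}+\delta^{2}},$$ and such that there is an integer $a\geq1$ for which $\sum_{i=0}^{M-1}(a+i)^{2}$ is a perfect square. Then: (i) if $\delta\equiv 1$ or $5\pmod 6$, then $M\equiv 0\pmod{\delta^{2}}$; if $\delta\equiv 0\pmod 6$, then $M\equiv 0\pmod{\delta^{2}/3}$; (ii) if moreover $f\equiv 1\pmod 2$, then $M\equiv 0\pmod{2\delta^{2}}$ when $\delta\equiv 1$ or $5\pmod 6$, and $M\equiv 0\pmod{2\delta^{2}/3}$ when $\delta\equiv 0\pmod 6$.
   Context: Here $f=a_2-a_1$ is the difference of the first terms of a pair $(a_1,a_2)$ of positive integers with $a_1+a_2=(\eta/\delta)M+1$. It is known from earlier work (cited) that a sum of $M>1$ consecutive squares $\sum_{i=0}^{M-1}(a+i)^2$ with $a\ge1$ can be a perfect square only if $M\equiv 0$ or $24\pmod{72}$, or $M\equiv 1,2$ or $16\pmod{24}$, or $M\equiv 9$ or $33\pmod{72}$, or $M\equiv 11\pmod{12}$. *)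

(* Defs.v *)
From mathcomp Require Import all_boot.
Set Implicit Arguments. Unset Strict Implicit. Unset Printing Implicit Defensive.

Definition sum_consec_sq (a M : nat) : nat := \sum_(i < M) (a + i) ^ 2.

(* Main.v *)
Require Import Defs.
From mathcomp Require Import all_boot.
From mathcomp Require Import all_algebra ring zify.

Lemma cop_add d a b : coprime d (a + d * b) = coprime d a.
Proof. by rewrite -coprime_modr addnC mulnC modnMDl coprime_modr. Qed.

Lemma cancel_l p a b : 0 < p -> p * a = p * b -> a = b.
Proof. by move=> h /eqP; rewrite eqn_pmul2l // => /eqP. Qed.

Lemma part_i_odd eta delta M f :
  coprime eta delta -> (delta %% 6 = 1 \/ delta %% 6 = 5) ->
  M * (3 * (eta + delta) ^ 2 + delta ^ 2) = delta ^ 2 * (3 * f ^ 2 - 1) ->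
  delta ^ 2 %| M.
Proof.
move=> Hc Hd Heq.
have c3 : coprime delta 3.
  rewrite coprime_sym prime_coprime //; apply/negP => h; lia.
have cD : coprime delta (3 * (eta + delta) ^ 2 + delta ^ 2).
  have -> : 3 * (eta + delta) ^ 2 + delta ^ 2 = 3 * eta ^ 2 + delta * (6 * eta + 4 * delta) by ring.
  by rewrite cop_add coprimeMr c3 /= coprimeXr // coprime_sym.
have : delta ^ 2 %| M * (3 * (eta + delta) ^ 2 + delta ^ 2) by rewrite Heq dvdn_mulr.
by rewrite Gauss_dvdl // coprimeXl.
Qed.

Lemma part_i_even eta c M f :
  coprime eta (6 * c) ->
  M * (3 * (eta + 6 * c) ^ 2 + (6 * c) ^ 2) = (6 * c) ^ 2 * (3 * f ^ 2 - 1) ->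
  12 * c ^ 2 %| M.
Proof.
move=> Hc Heq.
set E := (eta + 6 * c) ^ 2 + 12 * c ^ 2.
have HE : M * E = 12 * c ^ 2 * (3 * f ^ 2 - 1).
  apply: (@cancel_l 3) => //.
  move: Heq; move: (3 * f ^ 2 - 1) => x Heq.
  have e1 : 3 * (M * E) = M * (3 * (eta + 6 * c) ^ 2 + (6 * c) ^ 2) by rewrite /E; ring.
  have e2 : 3 * (12 * c ^ 2 * x) = (6 * c) ^ 2 * x by ring.
  by rewrite e1 e2.
have cE : coprime (6 * c) E.
  have -> : E = eta ^ 2 + 6 * c * (2 * eta + 8 * c) by rewrite /E; ring.
  by rewrite cop_add coprimeXr // coprime_sym.
have cE2 : coprime (12 * c ^ 2) E.
  apply: (coprime_dvdl _ (coprimeXl 2 cE)).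
  by apply/dvdnP; exists 3; ring.
have : 12 * c ^ 2 %| M * E by rewrite HE dvdn_mulr.
by rewrite Gauss_dvdl.
Qed.

Theorem corollary2 (eta delta M f : nat) :
  1 < eta -> 1 < delta -> 1 < M -> 0 < f ->
  coprime eta delta ->
  (* M = delta^2 (3 f^2 - 1) / (3 (eta+delta)^2 + delta^2), as an exact quotient *)
  M * (3 * (eta + delta) ^ 2 + delta ^ 2) = delta ^ 2 * (3 * f ^ 2 - 1) ->
  (exists a, 1 <= a /\ exists k, sum_consec_sq a M = k ^ 2) ->
  (* (i) *)
  ((delta %% 6 = 1 \/ delta %% 6 = 5) -> delta ^ 2 %| M) /\
  (delta %% 6 = 0 -> (delta ^ 2 %/ 3) %| M) /\
  (* (ii) *)
  (odd f ->
     ((delta %% 6 = 1 \/ delta %% 6 = 5) -> (2 * delta ^ 2) %| M) /\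
     (delta %% 6 = 0 -> (2 * (delta ^ 2 %/ 3)) %| M)).
Proof.
move=> He Hd HM Hf Hc Heq _.
have ev : delta %% 6 = 0 -> exists c, delta = 6 * c /\ delta ^ 2 %/ 3 = 12 * c ^ 2.
  move=> h; exists (delta %/ 6).
  have hd : delta = 6 * (delta %/ 6) by rewrite {1}(divn_eq delta 6) h addn0 mulnC.
  split => //; rewrite {1}hd.
  have -> : (6 * (delta %/ 6)) ^ 2 = 12 * (delta %/ 6) ^ 2 * 3 by ring.
  by rewrite mulnK.
split; first by move=> h; exact: (part_i_odd _ _ _ _ Hc h Heq).
split.
  move=> /ev [c [hd ->]]; subst delta; exact: (part_i_even _ _ _ _ Hc Heq).
move=> fo.
have [g hg] : exists g, f = 2 * g + 1.
  exists f./2; have := odd_double_half f; rewrite fo -muln2; lia.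
have hx : 3 * f ^ 2 - 1 = 2 * (6 * g ^ 2 + 6 * g + 1).
  have : 3 * f ^ 2 = 2 * (6 * g ^ 2 + 6 * g + 1) + 1 by rewrite hg; ring.
  move=> ->; by rewrite addnK.
split.
- move=> h; rewrite Gauss_dvd; last by rewrite coprimeXr // prime_coprime //; apply/negP => h2; lia.
  rewrite (part_i_odd _ _ _ _ Hc h Heq) andbT.
  have [e he] : exists e, delta = 2 * e + 1 by exists (delta %/ 2); lia.
  rewrite hx in Heq.
  apply/negPn/negP => hM.
  have [m hm] : exists m, M = 2 * m + 1 by exists (M %/ 2); lia.
  have [k [hk|hk]] : exists k, eta = 2 * k \/ eta = 2 * k + 1 by exists (eta %/ 2); lia.
  + set K := 3 * (k + e) ^ 2 + 3 * (k + e) + e ^ 2 + e + 1.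
    set Q := 6 * g ^ 2 + 6 * g + 1.
    have hD : 3 * (eta + delta) ^ 2 + delta ^ 2 = 2 * (2 * K) by rewrite hk he /K; ring.
    rewrite hD in Heq.
    have H2 : M * (2 * K) = delta ^ 2 * Q.
      apply: (@cancel_l 2) => //.
      have e1 : 2 * (M * (2 * K)) = M * (2 * (2 * K)) by ring.
      have e2 : 2 * (delta ^ 2 * Q) = delta ^ 2 * (2 * Q) by ring.
      by rewrite e1 e2.
    move: (congr1 odd H2); rewrite /Q he !oddM ?oddD ?oddX ?oddM /=.
    by rewrite andbF; case: (odd e); case: (odd g).
  + move: (congr1 odd Heq); rewrite hm hk he !oddM ?oddD ?oddX ?oddD ?oddM /=.
    by case: (odd m); case: (odd k); case: (odd e).
- move=> /ev [c [hd ->]]; subst delta.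
  have := part_i_even _ _ _ _ Hc Heq => /dvdnP [t ht].
  have c0 : 0 < c by lia.
  have p0 : 0 < 12 * c ^ 2 by rewrite muln_gt0 expn_gt0 c0.
  rewrite ht dvdn_pmul2r //.
  rewrite hx ht in Heq.
  set D := 3 * (eta + 6 * c) ^ 2 + (6 * c) ^ 2 in Heq.
  set Q := 6 * g ^ 2 + 6 * g + 1 in Heq.
  have Ht : t * D = 3 * (2 * Q).
    apply: (@cancel_l (12 * c ^ 2)) => //.
    have e1 : 12 * c ^ 2 * (t * D) = t * (12 * c ^ 2) * D by ring.
    have e2 : 12 * c ^ 2 * (3 * (2 * Q)) = (6 * c) ^ 2 * (2 * Q) by ring.
    by rewrite e1 e2.
  have eo : odd eta.
    apply/negPn/negP => hn.
    have : 2 %| gcdn eta (6 * c).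
      rewrite dvdn_gcd; apply/andP; split; first by rewrite dvdn2.
      by apply/dvdnP; exists (3 * c); ring.
    by move: Hc; rewrite /coprime => /eqP ->.
  apply/negPn/negP => hto.
  have to : odd t by move: hto; rewrite dvdn2 negbK.
  move: (congr1 odd Ht); rewrite /D /Q !oddM ?oddD ?oddX ?oddM ?oddD ?oddM /= ?eo ?to /=.
  by case: (odd c).
Qed.
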